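(* Let $\pi$ be uniform on $\mathrm{PF}_n$ and let $R(\pi)=\#\{1\le i\le n-1:\pi_i=\pi_{i+1}\}$ be the number of repeats. Then for each fixed integer $j\ge0$, $P(R(\pi)=j)\to \frac{1}{e\,j!}$ as $n\to\infty$.
   Context: A parking function of length $n$ is a sequence $(\pi_1,\dots,\pi_n)$ with $1\le\pi_i\le n$ such that $\#\{t:\pi_t\le i\}\ge i$ for all $1\le i\le n$; $\mathrm{PF}_n$ denotes the set of these. *)

(* Defs.v *)
From mathcomp Require Import all_boot.
Set Implicit Arguments. Unset Strict Implicit. Unset Printing Implicit Defensive.

(* A sequence (pi_1,...,pi_n) with 1 <= pi_i <= n is encoded as
   f : {ffun 'I_n -> 'I_n.+1} (position t : 'I_n stands for index t+1,
   value f t in {0..n}, required to be >= 1). *)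
Definition is_parking (n : nat) (f : {ffun 'I_n -> 'I_n.+1}) : bool :=
  [forall t, 0 < val (f t)] &&
  [forall i : 'I_n.+1, (0 < val i) ==> (val i <= #|[set t | val (f t) <= val i]|)].

Definition repeats (n : nat) (f : {ffun 'I_n -> 'I_n.+1}) : nat :=
  #|[set i : 'I_n | [exists k : 'I_n, (val k == (val i).+1) && (f k == f i)]]|.

Definition pf_count (n : nat) : nat := #|[set f : {ffun 'I_n -> 'I_n.+1} | is_parking f]|.

Definition pf_rep_count (n j : nat) : nat :=
  #|[set f : {ffun 'I_n -> 'I_n.+1} | is_parking f && (repeats f == j)]|.

(* Main.v *)
Require Import Defs.
From mathcomp Require Import all_boot zify.
Set Implicit Arguments. Unset Strict Implicit. Unset Printing Implicit Defensive.

Lemma pt_key N x r L : x < N -> r < N -> L < N ->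
  (((x + N - r) %% N) <= L) + (x < r) = (x < L + r + 1) + (x < L + r + 1 - N).
Proof.
move=> Hx Hr HL.
case: (leqP r x) => H1.
  have -> : (x + N - r) %% N = x - r.
    by rewrite -addnBAC // modnDr modn_small //; lia.
  case: (leqP (x - r) L) => H2; case: (ltnP x (L + r + 1)) => H3; case: (ltnP x (L + r + 1 - N)) => H4 //=; lia.
have -> : (x + N - r) %% N = x + N - r by rewrite modn_small //; lia.
case: (leqP (x + N - r) L) => H2; case: (ltnP x (L + r + 1)) => H3; case: (ltnP x (L + r + 1 - N)) => H4 //=; lia.
Qed.

Lemma sh_inj N x y r : x < N -> y < N -> r < N ->
  (x + N - r) %% N = (y + N - r) %% N -> x = y.
Proof.
move=> Hx Hy Hr.
have E : forall z, z < N -> (z + N - r) %% N = if r <= z then z - r else z + N - r.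
  move=> z Hz; case: leqP => H.
    by rewrite -addnBAC // modnDr modn_small //; lia.
  by rewrite modn_small //; lia.
rewrite !E //; case: (leqP r x); case: (leqP r y); lia.
Qed.

Section Cyclic.
Variable n : nat.
Local Notation N := n.+1.
Local Notation FF := {ffun 'I_n -> 'I_n.+1}.

Definition shiftr (r : 'I_N) (g : FF) : FF :=
  [ffun t => Ordinal (ltn_pmod (val (g t) + N - r) (ltn0Sn n))].

Lemma shiftr_inj r : injective (shiftr r).
Proof.
move=> g1 g2 E; apply/ffunP => t; apply: val_inj.
have := congr1 (fun f : FF => val (f t)) E; rewrite /= !ffunE /=.
by apply: sh_inj; rewrite ?ltn_ord.
Qed.



Lemma shiftr_eq r g k i : (shiftr r g k == shiftr r g i) = (g k == g i).
Proof.
apply/eqP/eqP => [E|E]; last by rewrite !ffunE E.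
apply: val_inj; have := congr1 val E; rewrite /= !ffunE /=.
by apply: sh_inj; rewrite ?ltn_ord.
Qed.

Lemma repeats_shiftr r g : repeats (shiftr r g) = repeats g.
Proof.
rewrite /repeats; apply: eq_card => i; rewrite !inE.
by apply: eq_existsb => k; rewrite shiftr_eq.
Qed.

Definition C (g : FF) (k : nat) : nat := \sum_(t : 'I_n) (val (g t) < k).

Lemma card_sum (T : finType) (P : pred T) : #|[set t | P t]| = \sum_t P t.
Proof.
rewrite -sum1_card big_mkcond /=; apply: eq_bigr => t _; rewrite inE; by case: (P t).
Qed.

Lemma C0 g : C g 0 = 0.
Proof. by rewrite /C big1. Qed.

Lemma C_le g k : C g k <= n.
Proof.
rewrite /C -[leqRHS]card_ord -sum1_card.
by apply: leq_sum => t _; case: (_ < _).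
Qed.

Lemma C_big g k : N <= k -> C g k = n.
Proof.
move=> Hk; rewrite /C -[RHS]card_ord -sum1_card.
by apply: eq_bigr => t _; rewrite (leq_trans (ltn_ord (g t)) Hk).
Qed.

Lemma C_mono g k1 k2 : k1 <= k2 -> C g k1 <= C g k2.
Proof.
move=> H; apply: leq_sum => t _; do 2 case: ltnP => //; lia.
Qed.

Lemma key r g L : L < N ->
  #|[set t | val (shiftr r g t) <= L]| + C g r = C g (L + r + 1) + C g (L + r + 1 - N).
Proof.
move=> HL; rewrite card_sum /C -!big_split /=; apply: eq_bigr => t _.
by rewrite ffunE /= pt_key ?ltn_ord.
Qed.

Lemma key2 r g L : L < N ->
  #|[set t | nat_of_ord (shiftr r g t) <= L]| + C g r = C g (L + r + 1) + C g (L + r + 1 - N).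
Proof. exact: key. Qed.

Definition FA g (r : nat) :=
  (forall k, 0 < k -> k <= r -> C g r.+1 + k < C g k + r.+1) /\
  (forall k, r.+1 < k -> k <= N -> C g r.+1 + k <= C g k + r.+1).

Lemma pos_iff r g : [forall t, 0 < shiftr r g t] <-> C g r.+1 = C g r.
Proof.
have := key r g (ltn0Sn n); rewrite add0n.
have -> : r + 1 - N = 0 by have := ltn_ord r; lia.
rewrite C0 addn0 addn1 => E.
have -> : [forall t, 0 < shiftr r g t] = (#|[set t | val (shiftr r g t) <= 0]| == 0).
  rewrite cards_eq0; apply/forallP/eqP => [H|H].
  apply/setP => t; rewrite !inE leqn0; apply/negbTE; rewrite -lt0n; exact: H.
  move=> t; have : t \notin [set t | val (shiftr r g t) <= 0] by rewrite H inE.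
  by rewrite inE leqn0 lt0n.
split => [/eqP H|H]; first by rewrite H in E; lia.
by apply/eqP; lia.
Qed.

Lemma parking_FA r g : is_parking (shiftr r g) <-> FA g r.
Proof.
have Hr := ltn_ord r.
rewrite /is_parking; split.
  move/andP => [/pos_iff H0 /forallP HL]; split.
  - move=> k Hk1 Hkr.
    have HLN : k + N - r - 1 < N by lia.
    have := HL (Ordinal HLN); rewrite /= => /implyP H1.
    have H2 : 0 < k + N - r - 1 by lia.
    have := H1 H2; have := key2 r g HLN.
    have -> : k + N - r - 1 + r + 1 - N = k by lia.
    rewrite (@C_big g (k + N - r - 1 + r + 1)); last by lia.
    move=> A B; have := leq_add B (leqnn (C g r)); rewrite A => B2. clear A B H1 HL. lia.
  - move=> k Hk1 HkN.
    have HLN : k - r - 1 < N by lia.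
    have := HL (Ordinal HLN); rewrite /= => /implyP H1.
    have H2 : 0 < k - r - 1 by lia.
    have := H1 H2; have := key2 r g HLN.
    have -> : k - r - 1 + r + 1 - N = 0 by lia.
    have -> : k - r - 1 + r + 1 = k by lia.
    rewrite C0 addn0 => A B; have := leq_add B (leqnn (C g r)); rewrite A => B2.
    clear A B H1 HL; lia.
move=> [F1 F2].
have H0 : C g r.+1 = C g r.
  case: (posnP r) => Hr0.
    have E0 : C g r = 0 by rewrite Hr0 C0.
    rewrite E0; case: (posnP n) => Hn.
      by rewrite C_big; lia.
    have := F2 N; rewrite (@C_big g N) // Hr0; lia.
  have := F1 r Hr0 (leqnn r); have := C_mono g (leqnSn r); lia.
apply/andP; split; first by apply/pos_iff.
apply/forallP => L; apply/implyP => HL0; have EL : val L = nat_of_ord L by [].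
have := key r g (ltn_ord L).
case: (leqP (L + r + 1) N) => HLr.
  have -> : L + r + 1 - N = 0 by lia.
  rewrite C0 => A; rewrite -(leq_add2r (C g r)) A.
  have := F2 (L + r + 1); rewrite /= in HL0 *; lia.
rewrite (@C_big g (L + r + 1)); last by lia.
move=> A; rewrite -(leq_add2r (C g r)) A.
have := F1 (L + r + 1 - N); have := ltn_ord L; rewrite /= in HL0 *; move: (C g (L + r + 1 - N)) => Ck; lia.
Qed.

Lemma FA_unique g (r1 r2 : 'I_N) : FA g r1 -> FA g r2 -> r1 = r2.
Proof.
move=> [A1 B1] [A2 B2]; apply: ord_inj; apply/eqP; rewrite eqn_leq; apply/andP.
have h1 := ltn_ord r1; have h2 := ltn_ord r2.
split; rewrite leqNgt; apply/negP => H.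
  have := A1 r2.+1 (ltn0Sn _) H; have := B2 r1.+1; lia.
have := A2 r1.+1 (ltn0Sn _) H; have := B1 r2.+1; lia.
Qed.

Lemma FA_exists g : exists r : 'I_N, FA g r.
Proof.
pose V k := C g k + N - k.
pose Pv v := [exists k : 'I_N.+1, (0 < val k) && (V k == v)].
have exv : exists v, Pv v by exists (V N); apply/existsP; exists ord_max; rewrite /= eqxx.
case: (ex_minnP exv) => v0 /existsP [k1 /andP [k1p /eqP k1v]] Hmin.
pose Pk k := (0 < k) && (k <= N) && (V k == v0).
have exk : exists k, Pk k.
  by exists k1; rewrite /Pk k1p -ltnS ltn_ord k1v eqxx.
case: (ex_minnP exk) => k0 /andP [/andP [k0p k0N] /eqP k0v] Hmin2.
have Hr : k0.-1 < N by lia.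
exists (Ordinal Hr); rewrite /=.
have Ek : k0.-1.+1 = k0 by lia.
rewrite /FA /= Ek; split.
- move=> k Hk1 Hkr.
  have HkN : k < N.+1 by lia.
  have G1 : v0 <= V k by apply: Hmin; apply/existsP; exists (Ordinal HkN); rewrite /= Hk1 eqxx.
  have G2 : V k != v0.
    apply/negP => /eqP E; have := Hmin2 k; rewrite /Pk Hk1 E eqxx /=.
    have -> : k <= N by lia.
    move=> /(_ isT); lia.
  move: G1 G2; rewrite -k0v /V; have := C_le g k; have := C_le g k0.
  move: (C g k) (C g k0) => a b; lia.
- move=> k Hk1 HkN.
  have HkN' : k < N.+1 by lia.
  have G1 : v0 <= V k by apply: Hmin; apply/existsP; exists (Ordinal HkN'); rewrite /= eqxx andbT; lia.
  move: G1; rewrite -k0v /V; have := C_le g k; have := C_le g k0.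
  move: (C g k) (C g k0) => a b; lia.
Qed.

Lemma card_park_shift g : #|[set r : 'I_N | is_parking (shiftr r g)]| = 1.
Proof.
case: (FA_exists g) => r0 H0.
rewrite (_ : [set r | _] = [set r0]) ?cards1 //.
apply/setP => r; rewrite !inE; apply/idP/eqP => [/parking_FA H | ->].
  exact: FA_unique H H0.
exact/parking_FA.
Qed.

Lemma count_shift (P : pred FF) : (forall r g, P (shiftr r g) = P g) ->
  \sum_(g : FF) (P g : nat) = N * #|[set f | is_parking f && P f]|.
Proof.
move=> HP.
transitivity (\sum_(g : FF) \sum_(r : 'I_N) ((is_parking (shiftr r g) && P g) : nat)).
  apply: eq_bigr => g _.
  rewrite (eq_bigr (fun r => (is_parking (shiftr r g) : nat) * P g)); last first.
    by move=> r _; case: (is_parking _); case: (P g).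
  by rewrite -big_distrl /= -card_sum card_park_shift mul1n.
rewrite exchange_big /= (eq_bigr (fun _ => #|[set f | is_parking f && P f]|)).
  by rewrite sum_nat_const card_ord.
move=> r _; rewrite card_sum [RHS](reindex_inj (@shiftr_inj r)) /=.
by apply: eq_bigr => g _; rewrite HP.
Qed.
End Cyclic.
Lemma sum_tupleS (T : finType) m (F : m.+1.-tuple T -> nat) :
  \sum_(t : m.+1.-tuple T) F t = \sum_(x : T) \sum_(t : m.-tuple T) F [tuple of x :: t].
Proof.
rewrite (partition_big (@thead _ _) predT) //=.
apply: eq_bigr => x _.
rewrite (reindex (fun t : m.-tuple T => [tuple of x :: t])) /=; last first.
  exists (fun t : m.+1.-tuple T => [tuple of behead t]) => [t _ | t /eqP <-]; first exact: val_inj.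
  by rewrite -tuple_eta.
by apply: eq_bigl => t; rewrite theadE eqxx.
Qed.

Fixpoint rp (T : eqType) (s : seq T) : nat :=
  match s with x :: ((y :: _) as s') => (y == x) + rp s' | _ => 0 end.

Lemma count_rp (T : finType) m (x : T) j :
  \sum_(t : m.-tuple T) (rp (x :: t) == j) = 'C(m, j) * (#|T|.-1) ^ (m - j).
Proof.
elim: m x j => [|m IH] x j.
  rewrite (eq_bigr (fun _ => (0 == j) : nat)); last by move=> t _; rewrite [t]tuple0.
  rewrite sum_nat_const card_tuple expn0 mul1n.
  by case: j.
have E : forall y (t : m.-tuple T), rp (x :: [tuple of y :: t]) = (y == x) + rp (y :: t) by [].
have H2 : \sum_(y | true && (y != x)) \sum_(t : m.-tuple T) (rp (x :: [tuple of y :: t]) == j)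
   = \sum_(y | true && (y != x)) ('C(m, j) * (#|T|.-1) ^ (m - j)).
  apply: eq_bigr => y Hy; have {}Hy : (y == x) = false by apply/negbTE; exact: Hy. rewrite -(IH y); apply: eq_bigr => t _; by rewrite E Hy.
rewrite sum_tupleS (bigD1 x) // H2.
rewrite -[ssrnat_addn__canonical__SemiGroup_ComLaw _ _]/(addn _ _).
have H1 : \sum_(t : m.-tuple T) (rp (x :: [tuple of x :: t]) == j) =
   if j is j'.+1 then \sum_(t : m.-tuple T) (rp (x :: t) == j') else 0.
  case: j {H2} => [|j]; [rewrite big1 // | apply: eq_bigr] => t _; by rewrite E eqxx.
rewrite H1 sum_nat_const cardC1.
case: j {H1 H2} => [|j].
  by rewrite !bin0 !subn0 expnS !mul1n.
rewrite IH binS.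
case: (ltngtP j m) => H.
- rewrite subSS; have -> : m - j = (m - j.+1).+1 by lia.
  rewrite expnS mulnDl addnC; congr (_ + _); rewrite mulnCA //.
- rewrite !bin_small //; lia.
- subst j; rewrite (bin_small (ltnSn m)) binn !subnn mul0n muln0 //.
Qed.

Lemma rp_cons2 (T : eqType) (x y : T) s : rp [:: x, y & s] = (y == x) + rp (y :: s).
Proof. by []. Qed.

Lemma rpE (T : eqType) (x0 : T) s :
  rp s = \sum_(i < size s) ((i.+1 < size s) && (nth x0 s i.+1 == nth x0 s i)).
Proof.
elim: s => [|x s IH]; first by rewrite big_ord0.
case: s IH => [|y s] IH; first by rewrite big_ord_recl big_ord0.
rewrite rp_cons2 IH [RHS]big_ord_recl; congr (_ + _).

Qed.

Lemma repeats_tuple n (t : n.-tuple 'I_n.+1) :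
  repeats [ffun i => tnth t i] = rp t.
Proof.
rewrite (rpE ord0) /repeats.
rewrite -sum1_card big_mkcond /= size_tuple.
apply: eq_bigr => i _; rewrite inE.
case: (boolP [exists k, _]) => [/existsP[k /andP[/eqP Hk /eqP Hf]] | /existsPn H].
  rewrite !ffunE in Hf.
  have Hi : i.+1 < n by rewrite -Hk ltn_ord.
  by rewrite Hi -Hk -(tnth_nth ord0 t k) -(tnth_nth ord0 t i) Hf eqxx.
case: (ltnP i.+1 n) => Hi //=.
have /negbTE -> // : nth ord0 t i.+1 != nth ord0 t i.
apply: contra (H (Ordinal Hi)) => /eqP E.
by rewrite !ffunE eqxx /= (tnth_nth ord0 t (Ordinal Hi)) /= E -tnth_nth eqxx.
Qed.

Lemma count_ffun_rep m j :
  \sum_(g : {ffun 'I_m.+1 -> 'I_m.+2}) (repeats g == j) = m.+2 * ('C(m, j) * m.+1 ^ (m - j)).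
Proof.
rewrite (reindex (fun t : m.+1.-tuple 'I_m.+2 => [ffun i => tnth t i])) /=; last first.
  exists (fun g : {ffun 'I_m.+1 -> 'I_m.+2} => [tuple g i | i < m.+1]) => [t _ | g _].
    by apply: eq_from_tnth => i; rewrite tnth_mktuple ffunE.
  by apply/ffunP => i; rewrite ffunE tnth_mktuple.
rewrite (eq_bigr (fun t : m.+1.-tuple _ => (rp t == j) : nat)); last by move=> t _; rewrite repeats_tuple.
rewrite sum_tupleS (eq_bigr (fun _ => 'C(m, j) * m.+1 ^ (m - j))); last first.
  by move=> x _; rewrite (count_rp m x j) card_ord.
by rewrite sum_nat_const card_ord.
Qed.

Lemma pf_rep_count_eq m j : pf_rep_count m.+1 j = 'C(m, j) * m.+1 ^ (m - j).
Proof.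
have := @count_shift m.+1 (fun g => repeats g == j) (fun r g => congr1 (fun x => x == j) (repeats_shiftr r g)).
rewrite count_ffun_rep /pf_rep_count => /eqP; rewrite eqn_pmul2l // => /eqP <-.
done.
Qed.

Lemma pf_count_eq m : pf_count m.+1 = m.+2 ^ m.
Proof.
have := @count_shift m.+1 (fun _ => true) (fun r g => erefl).
rewrite sum1_card card_ffun !card_ord expnS.
move=> /eqP; rewrite eqn_pmul2l // => /eqP ->.
by rewrite /pf_count; apply: eq_card => f; rewrite !inE andbT.
Qed.

From Stdlib Require Import Reals Factorial Lra.
From Coquelicot Require Import Coquelicot.
Open Scope R_scope.
Lemma lim_inv_shift (b : R) : 0 < b -> is_lim_seq (fun m => / (INR m + b)) 0.
Proof.
move=> hb.
have H : is_lim_seq (fun m => INR m + b) p_infty.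
  apply: (is_lim_seq_plus _ _ p_infty b p_infty); [exact: is_lim_seq_INR | exact: is_lim_seq_const | done].
have := is_lim_seq_inv _ _ H; simpl; apply; discriminate.
Qed.

Lemma lim_frac (a b : R) : 0 < b -> is_lim_seq (fun m => (INR m + a) / (INR m + b)) 1.
Proof.
move=> hb.
apply: (is_lim_seq_ext (fun m => 1 + (a - b) * / (INR m + b))).
  move=> m; have := pos_INR m; move=> hm; field; lra.
replace (Finite 1) with (Finite (1 + (a - b) * 0)) by (f_equal; ring).
apply: is_lim_seq_plus'; first exact: is_lim_seq_const.
apply: is_lim_seq_mult'; first exact: is_lim_seq_const.
exact: lim_inv_shift.
Qed.

Lemma exp_pow x m : exp x ^ m = exp (INR m * x).
Proof.
elim: m => [|m IH]; first by rewrite /= Rmult_0_l exp_0.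
by rewrite -[exp x ^ m.+1]/(exp x * exp x ^ m) IH S_INR -exp_plus; f_equal; ring.
Qed.

Lemma cont_exp x : continuity_pt exp x.
Proof. apply: derivable_continuous_pt; exact: derivable_pt_exp. Qed.

Lemma lim_e : is_lim_seq (fun m => (1 + / (INR m + 1)) ^ m) (exp 1).
Proof.
apply: (is_lim_seq_le_le (fun m => exp ((INR m + 0) / (INR m + 2)))
                         _ (fun m => exp ((INR m + 0) / (INR m + 1)))).
- move=> m; have hm := pos_INR m; split.
  + have -> : (INR m + 0) / (INR m + 2) = INR m * / (INR m + 2) by field; lra.
    rewrite -exp_pow; apply: pow_incr; split; first by left; apply: exp_pos.
    set y := / (INR m + 2).
    have hy : 0 < y < 1 by split; [apply: Rinv_0_lt_compat; lra | rewrite -Rinv_1; apply: Rinv_lt_contravar; lra].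
    have h := exp_ineq1_le (- y); rewrite exp_Ropp in h.
    have he := exp_pos y.
    have h2 : exp y * (1 - y) <= 1.
      have := Rmult_le_compat_l (exp y) _ _ (Rlt_le _ _ he) h.
      by rewrite Rinv_r; [lra | lra].
    have -> : 1 + / (INR m + 1) = / (1 - y) by rewrite /y; field; lra.
    apply: (Rmult_le_reg_r (1 - y)); first lra.
    by rewrite Rinv_l; lra.
  + have -> : (INR m + 0) / (INR m + 1) = INR m * / (INR m + 1) by field; lra.
    rewrite -exp_pow; apply: pow_incr; split.
      have : 0 < / (INR m + 1) by apply: Rinv_0_lt_compat; lra.
      lra.
    exact: exp_ineq1_le.
- apply: (is_lim_seq_continuous exp (fun m => (INR m + 0) / (INR m + 2)) 1 (cont_exp 1)).
  apply: lim_frac; lra.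
- apply: (is_lim_seq_continuous exp (fun m => (INR m + 0) / (INR m + 1)) 1 (cont_exp 1)).
  apply: lim_frac; lra.
Qed.


Lemma INR_muln (a b : nat) : INR (muln a b) = INR a * INR b.
Proof. by rewrite -multE mult_INR. Qed.

Lemma INR_expn (a b : nat) : INR (expn a b) = INR a ^ b.
Proof.
elim: b => [|b IH]; first by rewrite expn0.
by rewrite expnS INR_muln IH.
Qed.

Lemma fact_eq j : fact j = j`!.
Proof. elim: j => [|j IH] //=; by rewrite factS IH. Qed.

Lemma lim_ffact j : is_lim_seq (fun m => INR (falling_factorial m j) / (INR m + 1) ^ j) 1.
Proof.
elim: j => [|j IH].
  apply: (is_lim_seq_ext (fun _ => 1)); last exact: is_lim_seq_const.
  by move=> m; rewrite ffactn0 /=; field.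
apply: (is_lim_seq_ext_loc (fun m => INR (falling_factorial m j) / (INR m + 1) ^ j * ((INR m + - INR j) / (INR m + 1)))).
  exists j => m Hm.
  have hm := pos_INR m.
  rewrite ffactnSr INR_muln -minusE minus_INR; last exact: Hm.
  rewrite -[(INR m + 1) ^ j.+1]/((INR m + 1) * (INR m + 1) ^ j).
  field; split; [|lra]; apply: pow_nonzero; lra.
replace (Finite 1) with (Finite (1 * 1)) by (f_equal; ring).
apply: is_lim_seq_mult'; first exact: IH.
apply: lim_frac; lra.
Qed.

Lemma key_identity (m j : nat) (C F FF : nat) : (j <= m)%nat -> (C * F)%nat = FF -> F <> 0%nat ->
  INR (muln C (expn m.+1 (m - j))) / INR (expn m.+2 m) =
  / INR F * (INR FF / (INR m + 1) ^ j * / (1 + / (INR m + 1)) ^ m).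
Proof.
move=> Hjm HC HF.
have hm := pos_INR m.
rewrite INR_muln !INR_expn -HC INR_muln.
have E1 : INR m.+1 = INR m + 1 by rewrite S_INR.
have E2 : INR m.+2 = INR m + 2 by rewrite S_INR S_INR; ring.
rewrite E1 E2.
have -> : 1 + / (INR m + 1) = (INR m + 2) * / (INR m + 1) by field; lra.
rewrite Rpow_mult_distr pow_inv.
have Em : m = ((m - j) + j)%nat by rewrite subnK.
have -> : (INR m + 1) ^ m = (INR m + 1) ^ (m - j) * (INR m + 1) ^ j by rewrite -pow_add plusE -Em.
have h1 : (INR m + 1) ^ (m - j) <> 0 by apply: pow_nonzero; lra.
have h2 : (INR m + 1) ^ j <> 0 by apply: pow_nonzero; lra.
have h3 : (INR m + 2) ^ m <> 0 by apply: pow_nonzero; lra.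
have h4 : INR F <> 0 by apply: not_0_INR.
field; repeat split => //.
Qed.

Theorem mainTheorem10 (j : nat) :
  Un_cv (fun n : nat => INR (pf_rep_count n j) / INR (pf_count n))
        (/ (exp 1 * INR (fact j))).
Proof.
apply/is_lim_seq_Reals.
apply/is_lim_seq_incr_1.
apply: (is_lim_seq_ext_loc (fun m => / INR (fact j) * (INR (falling_factorial m j) / (INR m + 1) ^ j * / (1 + / (INR m + 1)) ^ m))).
  exists j => m Hm.
  rewrite pf_rep_count_eq pf_count_eq; symmetry; apply: key_identity.
  - by apply/leP.
  - by rewrite fact_eq bin_ffact.
  - exact: fact_neq_0.
have he := exp_pos 1.
have hf : INR (fact j) <> 0 by apply: INR_fact_neq_0.
replace (Finite (/ (exp 1 * INR (fact j)))) with (Finite (/ INR (fact j) * (1 * / exp 1))); last first.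
  f_equal; field; split; lra.
apply: is_lim_seq_mult'; first exact: is_lim_seq_const.
apply: is_lim_seq_mult'; first exact: lim_ffact.
have := is_lim_seq_inv _ _ lim_e; simpl; apply.
move=> [] E; lra.
Qed.
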